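(* If a graph $G$ is $\mathbb{Z}_3$-colorable, then $G$ is 5-degenerate; that is, $\chi_g(G)\leq Col(G)\leq 6$.
   Context: Graphs are finite, may have multiple edges but no loops. For an Abelian group $\Gamma$, $G$ is $\Gamma$-colorable if for some (equivalently, any) orientation $D$ of $G$ and every $\varphi:E(G)\to\Gamma$ there is $c:V(G)\to\Gamma$ with $c(w)-c(u)\neq\varphi(uw)$ for every directed edge $uw$ of $D$. A graph is $d$-degenerate if every subgraph has a vertex of degree at most $d$. The coloring number $Col(G)$ is the smallest $d$ such that $G$ is $(d-1)$-degenerate; equivalently $Col(G)-1$ is the maximum, over all subgraphs of $G$, of the minimum degree. The group chromatic number $\chi_g(G)$ is the smallest $k$ such that $G$ is $\Gamma$-colorable for every Abelian group $\Gamma$ of order at least $k$. *)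

(* Defs.v *)
From mathcomp Require Import all_boot all_order all_algebra.
Set Implicit Arguments. Unset Strict Implicit. Unset Printing Implicit Defensive.
Import GRing.Theory.
Local Open Scope ring_scope.

(* A finite loopless multigraph: vertex type V, edge type E, each edge e has
   endpoints [src e] and [tgt e] (distinct).  The pair (src, tgt) also fixes an
   orientation D of G: e is directed from src e to tgt e.  Every orientation of
   every finite loopless multigraph arises this way. *)
Definition loopless (V E : finType) (src tgt : E -> V) : Prop :=
  forall e : E, src e != tgt e.

Definition Z3_colorable (V E : finType) (src tgt : E -> V) : Prop :=
  forall phi : E -> 'Z_3, exists c : V -> 'Z_3,
    forall e : E, c (tgt e) - c (src e) != phi e.

Definition sub_deg (V E : finType) (src tgt : E -> V) (F : {set E}) (v : V) : nat :=
  #|[set e in F | (src e == v) || (tgt e == v)]|.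

Definition degenerate (V E : finType) (src tgt : E -> V) (d : nat) : Prop :=
  forall (S : {set V}) (F : {set E}),
    (forall e, e \in F -> (src e \in S) && (tgt e \in S)) ->
    S != set0 ->
    exists2 v, v \in S & (sub_deg src tgt F v <= d)%N.

(* Main.v *)
Require Import Defs.
From mathcomp Require Import all_boot all_order all_algebra.
From mathcomp Require Import zify.
Lemma foldr2 (s : seq nat) : all (pred1 2) s -> foldr muln 1 s = 2 ^ size s.
Proof. elim: s => //= x s IH /andP[/eqP -> /IH ->]; by rewrite expnS. Qed.

Lemma cardB (E : finType) (F : {set E}) (d : E -> 'Z_3) :
  #|pfamily (0 : 'Z_3)%R F (fun e => predC1 (d e))| = 2 ^ #|F|.
Proof.
rewrite card_pfamily foldr2.
  by rewrite size_map -cardE.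
by apply/allP => x /mapP [e _ ->] /=; rewrite cardC1 card_ord.
Qed.
Lemma cardP (T : finType) (S : {set T}) :
  #|pffun_on (0 : 'Z_3)%R S predT| = 3 ^ #|S|.
Proof. by rewrite card_pffun_on card_ord. Qed.

Lemma deg_sum (V E : finType) (src tgt : E -> V) (S : {set V}) (F : {set E}) :
  (\sum_(v in S) sub_deg src tgt F v <= 2 * #|F|)%N.
Proof.
rewrite /sub_deg.
have -> : (\sum_(v in S) #|[set e in F | (src e == v) || (tgt e == v)]|
   = \sum_(v in S) \sum_(e in F) (((src e == v) || (tgt e == v)) : nat))%N.
  apply: eq_bigr => v _; rewrite -sum1_card [LHS]big_mkcond [RHS]big_mkcond /=.
  by apply: eq_bigr => e _; rewrite inE; case: (e \in F); case: (_ || _).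
rewrite exchange_big /= -sum1_card big_distrr /= leq_sum // => e _.
rewrite muln1 -big_mkcondr /= sum1_card.
apply: leq_trans (_ : #|[set src e; tgt e]| <= 2)%N; last by rewrite cards2; case: (_ != _).
apply: subset_leq_card; apply/subsetP => v; rewrite !inE => /andP[_ /orP[] /eqP ->];
  by rewrite eqxx ?orbT.
Qed.

Theorem proposition7p6 (V E : finType) (src tgt : E -> V) :
  loopless src tgt -> Z3_colorable src tgt -> degenerate src tgt 5.
Proof.
move=> _ Hcol S F HF HS.
case: (boolP [exists v in S, sub_deg src tgt F v <= 5]%N).
  by case/existsP => v /andP[vS Hv]; exists v.
rewrite negb_exists => /forallP Hdeg.
have Hd v : v \in S -> (6 <= sub_deg src tgt F v)%N.
  by move=> vS; have := Hdeg v; rewrite vS /= -ltnNge.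
have H1 : (6 * #|S| <= 2 * #|F|)%N.
  apply: leq_trans _ (deg_sum V E src tgt S F).
  by rewrite -sum1_card big_distrr /= leq_sum // => v /Hd; rewrite muln1.
pose P := pffun_on (0 : 'Z_3)%R F predT.
pose C := pffun_on (0 : 'Z_3)%R S predT.
pose B (c : {ffun V -> 'Z_3}) :=
  pfamily (0 : 'Z_3)%R F (fun e => predC1 (c (tgt e) - c (src e))%R).
have H2 : (3 ^ #|F| <= 3 ^ #|S| * 2 ^ #|F|)%N.
  have eP : #|P| = 3 ^ #|F| by exact: cardP.
  have eC : #|C| = 3 ^ #|S| by exact: cardP.
  rewrite -eP -eC -sum_nat_const -(sum1_card P).
  apply: (@leq_trans (\sum_(phi in P) \sum_(c in C) ((phi \in B c) : nat))).
    apply: leq_sum => phi Pphi.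
    have [c Hc] := Hcol phi.
    pose c' := [ffun v => if v \in S then c v else 0%R].
    have c'C : c' \in C.
      apply/pffun_onP; split=> //; apply/subsetP => v; rewrite !inE ffunE.
      by case: (v \in S) => //; rewrite eqxx.
    rewrite (bigD1 c') //= (_ : phi \in B c' = true) //.
    apply/pfamilyP; split.
      by case/pffun_onP: Pphi.
    move=> e eF; rewrite !inE !ffunE.
    by case/andP: (HF e eF) => -> ->; rewrite eq_sym Hc.
  rewrite exchange_big /= leq_sum // => c _.
  rewrite -(cardB _ F (fun e => c (tgt e) - c (src e))%R) -sum1_card.
  apply: (@leq_trans (\sum_phi ((phi \in B c) : nat))).
    by rewrite [X in (_ <= X)%N](bigID (fun phi => phi \in P)) /= leq_addr.
  rewrite [X in (_ <= X)%N]big_mkcond /=; apply/eq_leq/eq_bigr => phi _.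
  by case: (phi \in B c).
have s0 : (0 < #|S|)%N by rewrite card_gt0.
have Hf : (3 * #|S| <= #|F|)%N by lia.
move: H2; rewrite -(subnK Hf).
move: (#|F| - 3 * #|S|)%N => k; move: #|S| s0 => s s0.
have e1 : (3 ^ (k + 3 * s) = 3 ^ k * 27 ^ s)%N.
  by rewrite expnD expnM.
have e2 : (3 ^ s * 2 ^ (k + 3 * s) = 2 ^ k * 24 ^ s)%N.
  by rewrite expnD expnM mulnCA -expnMn.
rewrite e1 e2 leqNgt => /negP H; exfalso; apply: H.
have h2 : (2 ^ k <= 3 ^ k)%N by elim: k {e1 e2} => // k IH; rewrite !expnS leq_mul.
apply: ltn_mulr => //; first by rewrite expn_gt0.
by rewrite ltn_exp2r.
Qed.
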